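(* Let $n\ge1$ and suppose $N_c\ge 2n$ and $N_f\ge 2n$. With the mesonic polynomials $\mathcal O_\alpha$ ($\alpha\in S_{2n}$) defined below, $$\dim_{\mathbb C}\operatorname{span}\{\mathcal O_\alpha:\alpha\in S_{2n}\}=\frac1{|H|}\sum_{\gamma\in H}\sum_{\alpha\in S_{2n}}\delta(\gamma\alpha\gamma^{-1}\alpha^{-1})=\frac1{|H|}\sum_{\sigma\in S_{2n}}\sum_{\gamma\in S_{2n}}\delta(\gamma\sigma\gamma^{-1}\sigma^{-1})\,\delta(\Sigma_0\gamma\Sigma_0\gamma^{-1}),$$ i.e. it equals the number of orbits of $S_{2n}$ under conjugation by $H$.
   Context: $\Sigma_0=(1\,2)(3\,4)\cdots(2n-1\,2n)\in S_{2n}$, $H=S_n[S_2]=\{\gamma\in S_{2n}:\gamma\Sigma_0\gamma^{-1}=\Sigma_0\}$ (order $2^nn!$), and $\delta(g)=1$ if $g$ is the identity and $0$ otherwise. For $a=1,\dots,N_f$, $\Phi_a$ is an $N_c\times N_c$ matrix of commuting indeterminates (distinct for distinct $(a,i,j)$), and for $\alpha\in S_{2n}$, $\mathcal O_\alpha=\sum_{a_1,\dots,a_n=1}^{N_f}\sum_{i_1,\dots,i_{2n}=1}^{N_c}\prod_{k=1}^{2n}(\Phi_{c_k})_{i_k\,i_{\alpha(k)}}$ with $c_{2m-1}=c_{2m}=a_m$. *)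

(* Defs.v *)
From HB Require Import structures.
From mathcomp Require Import all_boot all_order all_algebra all_fingroup all_field.
From mathcomp Require Import boolp.
From mathcomp Require Import mpoly.
Set Implicit Arguments. Unset Strict Implicit. Unset Printing Implicit Defensive.
Import GRing.Theory.
Local Open Scope ring_scope.

Definition lin_indep (F : fieldType) (V : lmodType F) (I : finType)
  (f : I -> V) (S : {set I}) : Prop :=
  forall c : I -> F, \sum_(i in S) c i *: f i = 0 -> forall i, i \in S -> c i = 0.

(* dimension of span{f i : i in I} = maximal size of a linearly independent
   subfamily (the rank of the family) *)
Definition span_dim (F : fieldType) (V : lmodType F) (I : finType)
  (f : I -> V) : nat :=
  \max_(S : {set I} | `[< lin_indep f S >]) #|S|.

Definition swap_fun (n : nat) (k : 'I_(2 * n)) : 'I_(2 * n) :=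
  @insubd nat (fun m => m < 2 * n)%N _ k (if odd k then k.-1 else k.+1)%N.

Lemma swap_fun_lt n (k : 'I_(2 * n)) :
  ((if odd k then k.-1 else k.+1) < 2 * n)%N.
Proof.
case: k => k hk /=; case ok: (odd k).
  by apply: leq_ltn_trans hk; apply: leq_pred.
rewrite ltn_neqAle hk andbT; apply/eqP => e.
by move: ok; rewrite -[odd k]negbK -/(odd k.+1) e oddM /=.
Qed.

Lemma swap_fun_inj n : injective (@swap_fun n).
Proof.
move=> x y; rewrite /swap_fun => /(congr1 val); rewrite !val_insubd !swap_fun_lt.
case: x => x hx; case: y => y hy /= e; apply: val_inj => /=; move: e.
case ox: (odd x); case oy: (odd y) => /=.
- by case: x ox {hx} => // x ox; case: y oy {hy} => // y oy /= ->.
- case: x ox {hx} => // x /= ox e; exfalso.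
  by move: ox; rewrite e /= oy.
- case: y oy {hy} => // y /= oy e; exfalso.
  by move: oy; rewrite -e /= ox.
- by case.
Qed.

(* Sigma_0 = (1 2)(3 4)...(2n-1 2n), 0-indexed: 2m <-> 2m+1 *)
Definition Sigma0 (n : nat) : 'S_(2 * n) := perm (@swap_fun_inj n).

(* H = S_n[S_2] = centralizer of Sigma0 *)
Definition Hwr (n : nat) : {set 'S_(2 * n)} :=
  [set g : 'S_(2 * n) | (g * Sigma0 n * g^-1)%g == Sigma0 n].

Definition delta (R : nzRingType) (m : nat) (g : 'S_m) : R := (g == 1%g)%:R.

Definition var_idx (Nf Nc : nat) := ('I_Nf * 'I_Nc * 'I_Nc)%type.
Definition nvars (Nf Nc : nat) := #|{: var_idx Nf Nc}|.

Definition Phi (Nf Nc : nat) (a : 'I_Nf) (i j : 'I_Nc)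
  : {mpoly algC[nvars Nf Nc]} := 'X_(enum_rank (a, i, j)).

(* color of position k (0-indexed): c_{2m} = c_{2m+1} = a_m *)
Definition pos_pair (n : nat) (k : 'I_(2 * n)) : 'I_n.
Proof.
refine (@Ordinal n (k./2) _).
case: k => k hk /=; rewrite -divn2 ltn_divLR // mulnC //.
Defined.

Definition mesonic (n Nf Nc : nat) (alpha : 'S_(2 * n))
  : {mpoly algC[nvars Nf Nc]} :=
  \sum_(a : {ffun 'I_n -> 'I_Nf}) \sum_(i : {ffun 'I_(2 * n) -> 'I_Nc})
    \prod_(k : 'I_(2 * n)) Phi (a (pos_pair k)) (i k) (i (alpha k)).

(* Main.v *)
Require Import Defs.
From HB Require Import structures.
From mathcomp Require Import all_boot all_order all_algebra all_fingroup all_field.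
From mathcomp Require Import mpoly.
From mathcomp Require Import zify.
Set Implicit Arguments. Unset Strict Implicit. Unset Printing Implicit Defensive.
Local Open Scope ring_scope.
Import GRing.Theory Num.Theory.
Lemma halfE (k : nat) : k = (odd k + 2 * k./2)%N.
Proof. by rewrite -[LHS]odd_double_half -muln2 mulnC. Qed.

Lemma half_bit (b : bool) h : ((b + 2 * h)./2 = h)%N.
Proof. by rewrite mulnC muln2 half_bit_double. Qed.

Lemma S0nat_half k : ((if odd k then k.-1 else k.+1)./2 = k./2)%N.
Proof.
rewrite [in RHS](halfE k) half_bit.
have := halfE k; case: (odd k) => e; rewrite {1}e.
  by rewrite add1n /= (half_bit false).
by rewrite add0n -add1n (half_bit true).
Qed.

Lemma same_pair x y : (x./2 = y./2)%N -> x <> y -> y = (if odd x then x.-1 else x.+1)%N.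
Proof.
move=> e ne; have ex := halfE x; have ey := halfE y; rewrite -e in ey.
by case: (odd x) ex => ex; case: (odd y) ey => ey /=; lia.
Qed.

Lemma odd_S0nat k : odd (if odd k then k.-1 else k.+1) = ~~ odd k.
Proof.
case ok: (odd k); have := halfE k; rewrite ok => e; rewrite e /=.
  by rewrite oddD oddM.
by rewrite add0n oddM.
Qed.

Section Basic.
Variable n : nat.
Local Notation p := (@pos_pair n).
Local Notation S0 := (Sigma0 n).

Lemma S0E (k : 'I_(2 * n)) : val (S0 k) = (if odd k then k.-1 else k.+1)%N.
Proof. by rewrite /Sigma0 permE /swap_fun val_insubd swap_fun_lt. Qed.

Lemma pE (k : 'I_(2*n)) : val (p k) = (k./2)%N.
Proof. by []. Qed.

Lemma p_S0 k : p (S0 k) = p k.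
Proof. by apply: val_inj; rewrite !pE S0E S0nat_half. Qed.

Lemma S0_same x y : p x = p y -> x != y -> y = S0 x.
Proof.
move=> /(congr1 val); rewrite !pE => e ne; apply: val_inj; rewrite S0E.
by apply: same_pair => // exy; move/eqP: ne; apply; apply: val_inj.
Qed.

Lemma S0_ne k : S0 k != k.
Proof.
apply/eqP => /(congr1 (fun x : 'I_(2*n) => odd x)); rewrite S0E odd_S0nat.
by case: (odd k).
Qed.


Lemma S0K k : S0 (S0 k) = k.
Proof.
apply: val_inj; rewrite !S0E odd_S0nat; case ok: (odd k) => /=.
  by case: (val k) ok => //.
by [].
Qed.

Lemma S0S0 : (S0 * S0 = 1)%g.
Proof. by apply/permP => k; rewrite permM S0K perm1. Qed.

Lemma S0V : (S0^-1 = S0)%g.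
Proof. by apply: (mulgI S0); rewrite mulgV S0S0. Qed.

Lemma commS0P (g : 'S_(2*n)) : reflect (forall k, g (S0 k) = S0 (g k)) (g \in 'C[S0]%g).
Proof.
apply: (iffP cent1P) => [c k | h].
  by rewrite -!permM c.
by apply/permP => k; rewrite !permM h.
Qed.

Lemma Hwr_cent : Hwr n = 'C[S0]%g.
Proof.
apply/setP => g; rewrite inE; apply/eqP/cent1P => [e | c].
  by rewrite /commute -{2}e mulgKV.
by rewrite c mulgK.
Qed.
End Basic.

Section Invariance.
Variables (n Nf Nc : nat).
Local Notation p := (@pos_pair n).
Local Notation S0 := (Sigma0 n).

Lemma ltn_twice (m : 'I_n) : (2 * m < 2 * n)%N.
Proof. by rewrite ltn_mul2l /=. Qed.

Definition twice (m : 'I_n) : 'I_(2 * n) := Ordinal (ltn_twice m).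

Lemma p_twice m : p (twice m) = m.
Proof. by apply: val_inj; rewrite pE /= (half_bit false). Qed.

Variable g : 'S_(2 * n).
Hypothesis gC : g \in 'C[S0]%g.

Definition pig (m : 'I_n) : 'I_n := p (g (twice m)).

Lemma pigP k : p (g k) = pig (p k).
Proof.
rewrite /pig; set t := twice (p k).
have pt : p t = p k by rewrite p_twice.
have [->|ne] := eqVneq t k => //.
have gS : forall k, g (S0 k) = S0 (g k) by apply/commS0P.
by rewrite (S0_same pt ne) gS p_S0.
Qed.

Lemma pig_surj m : pig (p (g^-1 (twice m))%g) = m.
Proof. by rewrite -pigP permKV p_twice. Qed.

Lemma hA_inj : injective (fun b : {ffun 'I_n -> 'I_Nf} => [ffun m => b (pig m)]).
Proof.
move=> b1 b2 /ffunP e; apply/ffunP => m.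
by have := e (p (g^-1 (twice m))%g); rewrite !ffunE pig_surj.
Qed.

Lemma hI_inj : injective (fun j : {ffun 'I_(2 * n) -> 'I_Nc} => [ffun k => j (g k)]).
Proof.
move=> b1 b2 /ffunP e; apply/ffunP => m.
by have := e (g^-1 m)%g; rewrite !ffunE permKV.
Qed.

Lemma mesonic_conj (a : 'S_(2 * n)) : mesonic Nf Nc a = mesonic Nf Nc (a ^ g)%g.
Proof.
rewrite /mesonic (reindex_inj hA_inj); apply: eq_bigr => b _.
rewrite (reindex_inj hI_inj); apply: eq_bigr => j _.
rewrite [RHS](reindex_inj (@perm_inj _ g)) /=.
by apply: eq_bigr => k _; rewrite !ffunE pigP permJ.
Qed.
End Invariance.

Section Key.
Variables (n Nf Nc : nat).
Local Notation p := (@pos_pair n).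
Local Notation S0 := (Sigma0 n).
Local Notation NV := (nvars Nf Nc).

Definition vr (x : var_idx Nf Nc) : 'I_NV := enum_rank x.

Definition mon (a : 'I_n -> 'I_Nf) (i : 'I_(2 * n) -> 'I_Nc) (b : 'S_(2 * n))
  : 'X_{1..NV} :=
  \big[+%MM/0%MM]_(k : 'I_(2 * n)) U_(vr (a (p k), i k, i (b k)))%MM.

Lemma term_mon (a : 'I_n -> 'I_Nf) (i : 'I_(2 * n) -> 'I_Nc) (b : 'S_(2 * n)) :
  \prod_(k : 'I_(2 * n)) Phi (a (p k)) (i k) (i (b k)) =
  'X_[mon a i b] :> {mpoly algC[NV]}.
Proof.
rewrite /mon (big_morph (@mpolyX NV algC) (@mpolyXD NV algC) (@mpolyX0 NV algC)).
by [].
Qed.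

Lemma monE (a : 'I_n -> 'I_Nf) (i : 'I_(2 * n) -> 'I_Nc) (b : 'S_(2 * n)) v : mon a i b v = (\sum_(k : 'I_(2 * n)) (vr (a (p k), i k, i (b k)) == v))%N.
Proof. by rewrite /mon mnm_sumE; apply: eq_bigr => k _; rewrite mnm1E. Qed.

Lemma mesonic_coef (b : 'S_(2 * n)) m : (mesonic Nf Nc b)@_m =
  \sum_(a : {ffun 'I_n -> 'I_Nf}) \sum_(i : {ffun 'I_(2 * n) -> 'I_Nc}) ((mon a i b == m)%:R).
Proof.
rewrite /mesonic raddf_sum; apply: eq_bigr => a _.
rewrite raddf_sum; apply: eq_bigr => i _.
by rewrite term_mon; apply: mcoeffX.
Qed.
End Key.

Section Key2.
Variables (n Nf Nc : nat).
Hypotheses (hNc : (2 * n <= Nc)%N) (hNf : (n <= Nf)%N).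
Local Notation p := (@pos_pair n).
Local Notation S0 := (Sigma0 n).
Local Notation NV := (nvars Nf Nc).

Definition io : 'I_(2 * n) -> 'I_Nc := widen_ord hNc.
Definition fo : 'I_n -> 'I_Nf := widen_ord hNf.

Lemma io_inj : injective io.
Proof. by move=> x y /(congr1 val) /= e; apply: val_inj. Qed.
Lemma fo_inj : injective fo.
Proof. by move=> x y /(congr1 val) /= e; apply: val_inj. Qed.

Lemma sum_eq1 (T : finType) (k0 : T) : (\sum_(k : T) (k == k0) = 1)%N.
Proof.
rewrite (bigD1 k0) //= eqxx big1 // => k /negbTE ->. by [].
Qed.

Lemma mon_orbit (a : 'I_n -> 'I_Nf) (i : 'I_(2 * n) -> 'I_Nc) (b al : 'S_(2 * n)) :
  mon a i b = mon fo io al -> b \in (al ^: 'C[S0])%g.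
Proof.
move=> e.
set f := fun k => vr (a (p k), i k, i (b k)).
set h := fun k => vr (fo (p k), io k, io (al k)).
have cnt v : (\sum_k (f k == v) = \sum_k (h k == v))%N by rewrite -!monE e.
have h_inj : injective h.
  by move=> x y /enum_rank_inj; case=> _ e2 _; apply: val_inj.
have cnth k' : (\sum_k (h k == h k') = 1)%N.
  rewrite (eq_bigr (fun k => nat_of_bool (k == k'))); first exact: sum_eq1.
  by move=> k _; rewrite (inj_eq h_inj).
have exh k : exists k', h k' = f k.
  suff /existsP [k' /eqP hk'] : [exists k', h k' == f k] by exists k'.
  apply: contraT; rewrite negb_exists => /forallP nh.
  have := cnt (f k); rewrite [RHS]big1; last by move=> k' _; rewrite (negbTE (nh k')).
  by rewrite (bigD1 k) //= eqxx.
have f_inj : injective f.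
  move=> k1 k2 ef; apply/eqP; apply: contraT => ne.
  have [k' hk'] := exh k1.
  have := cnt (f k1); rewrite -hk' cnth (bigD1 k1) //= (bigD1 k2) /=; last by rewrite eq_sym.
  by rewrite hk' ef !eqxx.
pose gf k := odflt k [pick k' | h k' == f k].
have gfP k : h (gf k) = f k.
  rewrite /gf; case: pickP => [k' /eqP //|/= none].
  by have [k' hk'] := exh k; move: (none k'); rewrite hk' eqxx.
have gf_inj : injective gf.
  by move=> x y exy; apply: f_inj; rewrite -!gfP exy.
pose g := perm gf_inj.
have gE k : g k = gf k by rewrite permE.
have tri k : [/\ a (p k) = fo (p (g k)), i k = io (g k) & i (b k) = io (al (g k))].
  have := gfP k; rewrite gE => /enum_rank_inj; by case=> e1 e2 e3; split; apply/esym.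
have gb k : g (b k) = al (g k).
  apply: io_inj; have [_ <- _] := tri (b k); by have [_ _ <-] := tri k.
have gC : g \in 'C[S0]%g.
  apply/commS0P => k; apply: S0_same; last first.
    by rewrite (inj_eq (@perm_inj _ g)) eq_sym S0_ne.
  apply: fo_inj; have [<- _ _] := tri k; have [<- _ _] := tri (S0 k).
  by rewrite p_S0.
have -> : b = (al ^ g^-1)%g.
  apply/permP => k; rewrite conjgE invgK !permM.
  by rewrite -gb permK.
by apply: memJ_class; rewrite groupV.
Qed.
End Key2.

From mathcomp Require Import boolp.

Lemma sum_mem_card (T : finType) (A : {set T}) :
  \sum_(x : T) ((x \in A)%:R : algC) = #|A|%:R.
Proof.
rewrite -sum1_card natr_sum [RHS]big_mkcond; apply: eq_bigr => x _.
by case: (x \in A).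
Qed.

Section Main.
Variables (n Nf Nc : nat).
Hypotheses (hNc : (2 * n <= Nc)%N) (hNf : (n <= Nf)%N).
Local Notation S0 := (Sigma0 n).
Local Notation C := ('C[Sigma0 n])%G.
Local Notation f := (@mesonic n Nf Nc).
Local Notation Orb := (orbit 'J C @: [set: 'S_(2 * n)]).

Lemma same_orbit_eq x y : y \in (x ^: C)%g -> f y = f x.
Proof. by case/imsetP => h hC ->; rewrite -mesonic_conj. Qed.

Lemma span_le : (span_dim f <= #|Orb|)%N.
Proof.
apply/bigmax_leqP => S /asboolP li.
rewrite -(card_in_imset (f := orbit 'J C)); last first.
  move=> x y xS yS eo; apply/eqP; apply: contraT => ne.
  have yx : y \in (x ^: C)%g by rewrite -[(x ^: C)%g]/(orbit 'J C x) eo; apply: class_refl.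
  pose c := fun i : 'S_(2 * n) => ((i == x)%:R - (i == y)%:R : algC).
  have := li c; rewrite /c.
  have s1 z : z \in S -> \sum_(i in S) ((i == z)%:R : algC) *: f i = f z.
    move=> zS; rewrite (bigD1 z) //= eqxx scale1r big1 ?addr0 //.
    by move=> i /andP [_ /negbTE ->]; rewrite scale0r.
  under eq_bigr do rewrite scalerBl.
  rewrite sumrB s1 // s1 // (same_orbit_eq yx) subrr => /(_ erefl x xS).
  by rewrite eqxx (negbTE ne) subr0 => /eqP; rewrite oner_eq0.
by apply: subset_leq_card; apply: imsetS; apply: subsetT.
Qed.

Definition Sr := [set repr O | O in Orb].

Lemma repr_class x : (repr (x ^: C) ^: C = x ^: C)%g.
Proof. by apply/class_eqP; apply: mem_repr (class_refl _ _). Qed.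

Lemma Sr_uniq x y : x \in Sr -> y \in Sr -> y \in (x ^: C)%g -> y = x.
Proof.
case/imsetP => _ /imsetP [u _ ->] ->; case/imsetP => _ /imsetP [v _ ->] ->.
rewrite !orbitJ => /class_eqP; rewrite !repr_class => ->.
by [].
Qed.

Lemma card_Sr : #|Sr| = #|Orb|.
Proof.
apply: card_in_imset => _ _ /imsetP [u _ ->] /imsetP [v _ ->] e.
by rewrite !orbitJ -(repr_class u) -(repr_class v) -!orbitJ e.
Qed.

Lemma coef_self (al : 'S_(2 * n)) : (f al)@_(mon (fo hNf) (io hNc) al) != 0.
Proof.
rewrite mesonic_coef.
have -> : \sum_(a : {ffun 'I_n -> 'I_Nf}) \sum_(i : {ffun 'I_(2 * n) -> 'I_Nc})
   ((mon a i al == mon (fo hNf) (io hNc) al)%:R : algC) =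
   (\sum_(a : {ffun 'I_n -> 'I_Nf}) \sum_(i : {ffun 'I_(2 * n) -> 'I_Nc})
   (mon a i al == mon (fo hNf) (io hNc) al : nat))%:R.
  by rewrite natr_sum; apply: eq_bigr => a _; rewrite natr_sum.
rewrite pnatr_eq0 (bigD1 [ffun m => fo hNf m]) //= (bigD1 [ffun k => io hNc k]) //=.
have -> : mon [ffun m => fo hNf m] [ffun k => io hNc k] al = mon (fo hNf) (io hNc) al.
  by rewrite /mon; apply: eq_bigr => k _; rewrite !ffunE.
by rewrite eqxx.
Qed.

Lemma Sr_indep : lin_indep f Sr.
Proof.
move=> c e al alS.
have := congr1 (mcoeff (mon (fo hNf) (io hNc) al)) e.
rewrite raddf_sum raddf0 (bigD1 al) //= big1 ?addr0; last first.
  move=> b /andP [bS nb]; rewrite mcoeffZ mesonic_coef big1 ?mulr0 // => a _.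
  rewrite big1 // => i _.
  case: eqP => // /mon_orbit => bo.
  by move: nb; rewrite (Sr_uniq alS bS bo) eqxx.
rewrite mcoeffZ => /eqP; rewrite mulf_eq0 (negbTE (coef_self al)) orbF.
by move/eqP.
Qed.

Lemma span_ge : (#|Orb| <= span_dim f)%N.
Proof.
rewrite -card_Sr; apply: (leq_bigmax_cond (F := fun S : {set 'S_(2 * n)} => #|S|)).
by apply/asboolP; apply: Sr_indep.
Qed.

End Main.

Lemma deltaS0 n (g : 'S_(2 * n)) :
  delta algC (Sigma0 n * g * Sigma0 n * g^-1)%g = (g \in 'C[Sigma0 n]%g)%:R.
Proof.
rewrite /delta -eq_mulgV1; congr (nat_of_bool _)%:R.
apply/eqP/cent1P => [e | c].
  by rewrite /commute -{1}e -!mulgA S0S0 mulg1.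
by rewrite -c -mulgA S0S0 mulg1.
Qed.

Lemma fixE n (g a : 'S_(2 * n)) :
  delta algC (g * a * g^-1 * a^-1)%g = (a \in ('Fix_([set: 'S_(2 * n)] | 'J)[g])%g)%:R.
Proof.
rewrite /delta -eq_mulgV1 in_setI in_setT /=; congr (nat_of_bool _)%:R.
apply/eqP/afix1P => /= e.
  by rewrite -{1}e conjgE !mulgA mulVg mul1g mulgKV.
by rewrite -{1}e conjgE !mulgA mulgV mul1g mulgK.
Qed.

Theorem mainTheorem7 (n Nf Nc : nat) :
  (1 <= n)%N -> (2 * n <= Nc)%N -> (2 * n <= Nf)%N ->
  [/\ (span_dim (@mesonic n Nf Nc))%:R =
        (#|Hwr n|%:R)^-1 *
          \sum_(g in Hwr n) \sum_(a : 'S_(2 * n))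
             delta algC (g * a * g^-1 * a^-1)%g,
      (span_dim (@mesonic n Nf Nc))%:R =
        (#|Hwr n|%:R : algC)^-1 *
          \sum_(s : 'S_(2 * n)) \sum_(g : 'S_(2 * n))
             delta algC (g * s * g^-1 * s^-1)%g
             * delta algC (Sigma0 n * g * Sigma0 n * g^-1)%g
    & span_dim (@mesonic n Nf Nc) = #|orbit 'J (Hwr n) @: [set: 'S_(2 * n)]| ].
Proof.
move=> n1 hNc hNf2.
have hNf : (n <= Nf)%N by lia.
have hD : span_dim (@mesonic n Nf Nc) = #|orbit 'J (Hwr n) @: [set: 'S_(2 * n)]|.
  by rewrite Hwr_cent; apply/eqP; rewrite eqn_leq span_le // span_ge.
have acts : [acts 'C[Sigma0 n]%G, on [set: 'S_(2 * n)] | 'J].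
  by apply/actsP => g _ x; rewrite !inE.
have FC := Frobenius_Cauchy acts.
have key : \sum_(g in 'C[Sigma0 n]%G) \sum_(a : 'S_(2 * n)) delta algC (g * a * g^-1 * a^-1)%g
   = (#|orbit 'J 'C[Sigma0 n]%G @: [set: 'S_(2 * n)]| * #|'C[Sigma0 n]%G|)%:R.
  rewrite -FC natr_sum; apply: eq_bigr => g _.
  under eq_bigr do rewrite fixE.
  exact: sum_mem_card.
have cnz : (#|'C[Sigma0 n]%G|%:R : algC) != 0 by rewrite pnatr_eq0 -lt0n cardG_gt0.
split => //.
- by rewrite hD Hwr_cent key natrM mulrC mulfK.
- rewrite exchange_big /=.
  rewrite (eq_bigr (fun g => if g \in 'C[Sigma0 n]%G then
       \sum_(a : 'S_(2 * n)) delta algC (g * a * g^-1 * a^-1)%g else 0)); last first.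
    move=> g _; rewrite -mulr_suml deltaS0.
    by case: (g \in _); rewrite ?mulr1 ?mulr0.
  by rewrite -big_mkcond /= key hD Hwr_cent natrM mulrC mulfK.
Qed.
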